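(* Let $X$ be a complete metric space, $\mathcal Z_{\mathcal S}=(X,(\phi_j)_{j=0}^{n-1},(\rho_j)_{j=0}^{n-1})$ a Matkowski contractive GIFZS of degree $m$ with fuzzy attractor $u_{\mathcal Z}$, $\mathcal S=(X,(\phi_j)_{j=0}^{n-1})$ with attractor $A_{\mathcal S}$, $I=\{j:\rho_j(1)=1\}$, and $\mathcal S'=(X,(\phi_j)_{j\in I})$ with attractor $A_{\mathcal S'}$. Then: (1) $[u_{\mathcal Z}]^0\subseteq A_{\mathcal S}$, and if $r_+^j=0$ for all $j$, then $[u_{\mathcal Z}]^0=A_{\mathcal S}$; (2) $A_{\mathcal S'}\subseteq[u_{\mathcal Z}]^1$, and if $\beta_j(1)=1$ for all $j\in I$, then $A_{\mathcal S'}=[u_{\mathcal Z}]^1$; (3) if $I=\{0,\dots,n-1\}$, then $u_{\mathcal Z}=\chi_{A_{\mathcal S}}$.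
   Context: A fuzzy subset of $X$ is $u:X\to[0,1]$. For $\alpha\in(0,1]$, $[u]^\alpha=\{x:u(x)\ge\alpha\}$, $[u]^0=\overline{\{x:u(x)>0\}}$. $\mathcal F_X^*$: fuzzy subsets that are normal, usc and compactly supported. $\chi_A$ is the indicator function of $A$. $X^m$ has the maximum metric $d^m$. For $T:Z\to Y$, $T(u)(y)=\sup\{u(z):T(z)=y\}$ if $y\in T(Z)$, else $0$; $\rho(u)=\rho\circ u$; $(u_0\times\cdots\times u_{m-1})(x_0,\dots,x_{m-1})=\min_iu_i(x_i)$; $\vee$ is pointwise max. A family $(\rho_j)$ of maps $[0,1]\to[0,1]$ is admissible if each is nondecreasing, right continuous, $\rho_j(0)=0$, and $\rho_j(1)=1$ for some $j$. For each $j$: $r_+^j=\inf\{t:\rho_j(t)>0\}$ and $\beta_j(\alpha)=\inf\{t\in[0,1]:\rho_j(t)\ge\alpha\}$ for $\alpha\in[0,\rho_j(1)]$. A GIFS of degree $m$ is $(X,(\phi_j))$ with continuous $\phi_j:X^m\to X$; it is Matkowski contractive if each $\phi_j$ satisfies $d(\phi_j(x),\phi_j(y))\le\varphi_j(d^m(x,y))$ for some nondecreasing $\varphi_j$ with $\varphi_j^{(k)}(t)\to0$ for all $t>0$; on complete $X$ its attractor is the unique nonempty compact $A$ with $A=\bigcup_j\phi_j(A\times\cdots\times A)$. A GIFZS $(X,(\phi_j),(\rho_j))$ consists of such a GIFS and an admissible $(\rho_j)$; its operator is $\mathcal Z_{\mathcal S}(u_0,\dots,u_{m-1})=\bigvee_j\rho_j(\phi_j(u_0\times\cdots\times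 u_{m-1}))$, and its fuzzy attractor is the unique $u_{\mathcal Z}\in\mathcal F_X^*$ with $\mathcal Z_{\mathcal S}(u_{\mathcal Z},\dots,u_{\mathcal Z})=u_{\mathcal Z}$. *)

(* Defs.v *)
From mathcomp Require Import ssreflect ssrfun ssrbool eqtype ssrnat seq fintype bigop.
From Stdlib Require Import Reals ClassicalEpsilon List.
Set Implicit Arguments.
Unset Strict Implicit.
Open Scope R_scope.

Section Defs.
Variable X : Type.

Definition is_metric (d : X -> X -> R) : Prop :=
  (forall x y, 0 <= d x y) /\ (forall x y, d x y = 0 <-> x = y) /\
  (forall x y, d x y = d y x) /\ (forall x y z, d x z <= d x y + d y z).

Definition cauchy (d : X -> X -> R) (s : nat -> X) : Prop :=
  forall eps, 0 < eps -> exists N, forall p q, (N <= p)%nat -> (N <= q)%nat -> d (s p) (s q) < eps.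

Definition converges_to (d : X -> X -> R) (s : nat -> X) (l : X) : Prop :=
  forall eps, 0 < eps -> exists N, forall p, (N <= p)%nat -> d (s p) l < eps.

Definition complete (d : X -> X -> R) : Prop :=
  forall s, cauchy d s -> exists l, converges_to d s l.

Definition open_set (d : X -> X -> R) (O : X -> Prop) : Prop :=
  forall x, O x -> exists eps, 0 < eps /\ forall y, d x y < eps -> O y.

Definition compact (d : X -> X -> R) (K : X -> Prop) : Prop :=
  forall (Idx : Type) (U : Idx -> X -> Prop),
    (forall i, open_set d (U i)) -> (forall x, K x -> exists i, U i x) ->
    exists l : list Idx, forall x, K x -> exists i, In i l /\ U i x.

Definition closure (d : X -> X -> R) (S : X -> Prop) : X -> Prop :=
  fun x => forall eps, 0 < eps -> exists y, S y /\ d x y < eps.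

Definition nonempty (S : X -> Prop) : Prop := exists x, S x.

Definition dmax (d : X -> X -> R) (m : nat) (x y : 'I_m -> X) : R :=
  \big[Rmax/0]_(i < m) d (x i) (y i).

Definition fuzzy (u : X -> R) : Prop := forall x, 0 <= u x <= 1.

(* [u]^alpha for alpha in (0,1] *)
Definition alpha_cut (u : X -> R) (alpha : R) : X -> Prop := fun x => alpha <= u x.
Definition zero_cut (d : X -> X -> R) (u : X -> R) : X -> Prop :=
  closure d (fun x => 0 < u x).

Definition normal (u : X -> R) : Prop := exists x, u x = 1.

Definition usc (d : X -> X -> R) (u : X -> R) : Prop :=
  forall x eps, 0 < eps -> exists delta, 0 < delta /\
    forall y, d x y < delta -> u y < u x + eps.

Definition fuzzy_star (d : X -> X -> R) (u : X -> R) : Prop :=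
  fuzzy u /\ normal u /\ usc d u /\ compact d (zero_cut d u).

Definition chi (A : X -> Prop) : X -> R :=
  fun x => if excluded_middle_informative (A x) then 1 else 0.

End Defs.

(* sup of a set of reals (meaningful when nonempty and bounded above) *)
Definition sup_R (S : R -> Prop) : R := epsilon (inhabits 0) (fun v => is_lub S v).

Definition zadeh {Z Y : Type} (T : Z -> Y) (u : Z -> R) : Y -> R :=
  fun y => epsilon (inhabits 0) (fun v =>
     ((exists z, T z = y) /\ is_lub (fun r => exists z, T z = y /\ r = u z) v) \/
     (~ (exists z, T z = y) /\ v = 0)).

Definition fprod {X : Type} (m : nat) (us : 'I_m -> X -> R) : ('I_m -> X) -> R :=
  fun x => \big[Rmin/1]_(i < m) us i (x i).

(* inf over [0,1], with the convention inf (empty) = 1 *)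
Definition is_glb (S : R -> Prop) (v : R) : Prop :=
  (forall t, S t -> v <= t) /\ (forall w, (forall t, S t -> w <= t) -> w <= v).
Definition inf01 (S : R -> Prop) : R := epsilon (inhabits 0) (fun v =>
  ((exists t, S t) /\ is_glb S v) \/ (~ (exists t, S t) /\ v = 1)).

Definition r_plus (rho : R -> R) : R := inf01 (fun t => 0 <= t <= 1 /\ 0 < rho t).
Definition beta (rho : R -> R) (alpha : R) : R :=
  inf01 (fun t => 0 <= t <= 1 /\ alpha <= rho t).

Definition admissible (n : nat) (rho : 'I_n -> R -> R) : Prop :=
  (forall j t, 0 <= t <= 1 -> 0 <= rho j t <= 1) /\
  (forall j s t, 0 <= s -> s <= t -> t <= 1 -> rho j s <= rho j t) /\
  (forall j t, 0 <= t < 1 -> forall eps, 0 < eps -> exists delta, 0 < delta /\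
       forall s, t <= s < t + delta -> s <= 1 -> Rabs (rho j s - rho j t) < eps) /\
  (forall j, rho j 0 = 0) /\
  (exists j, rho j 1 = 1).

Definition continuous_m {X : Type} (d : X -> X -> R) (m : nat) (f : ('I_m -> X) -> X) : Prop :=
  forall x eps, 0 < eps -> exists delta, 0 < delta /\
    forall y, dmax d x y < delta -> d (f x) (f y) < eps.

Definition matkowski {X : Type} (d : X -> X -> R) (m : nat) (f : ('I_m -> X) -> X) : Prop :=
  exists phi : R -> R,
    (forall t, 0 <= t -> 0 <= phi t) /\
    (forall s t, 0 <= s -> s <= t -> phi s <= phi t) /\
    (forall t, 0 < t -> Un_cv (fun k => iter k phi t) 0) /\
    (forall x y, d (f x) (f y) <= phi (dmax d x y)).

Definition matkowski_GIFS {X : Type} (d : X -> X -> R) (m n : nat)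
  (phi : 'I_n -> ('I_m -> X) -> X) : Prop :=
  forall j, continuous_m d (phi j) /\ matkowski d (phi j).

Definition is_attractor {X : Type} (d : X -> X -> R) (m n : nat) (P : 'I_n -> Prop)
  (phi : 'I_n -> ('I_m -> X) -> X) (A : X -> Prop) : Prop :=
  nonempty A /\ compact d A /\
  forall x, A x <-> exists j, P j /\ exists y : 'I_m -> X, (forall i, A (y i)) /\ phi j y = x.

Definition Zop {X : Type} (m n : nat) (phi : 'I_n -> ('I_m -> X) -> X)
  (rho : 'I_n -> R -> R) (us : 'I_m -> X -> R) : X -> R :=
  fun x => \big[Rmax/0]_(j < n) rho j (zadeh (phi j) (fprod us) x).

Definition is_fuzzy_attractor {X : Type} (d : X -> X -> R) (m n : nat)
  (phi : 'I_n -> ('I_m -> X) -> X) (rho : 'I_n -> R -> R) (u : X -> R) : Prop :=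
  fuzzy_star d u /\ forall x, Zop phi rho (fun _ => u) x = u x.

(* Main.v *)
Require Import Defs.
From mathcomp Require Import ssreflect ssrfun ssrbool eqtype ssrnat seq fintype bigop.
From Stdlib Require Import Reals ClassicalEpsilon List Lra.
Open Scope R_scope.

Section Big0.
Variable I : Type.

Lemma bmax_le (r : list I) x0 (F : I -> R) c :
  x0 <= c -> (forall i, F i <= c) -> \big[Rmax/x0]_(i <- r) F i <= c.
Proof. move=> h0 hF; apply: (big_ind (fun v => v <= c)) => // x y hx hy.
  by apply: Rmax_lub. Qed.

Lemma bmax_lt (r : list I) x0 (F : I -> R) c :
  x0 < c -> (forall i, F i < c) -> \big[Rmax/x0]_(i <- r) F i < c.
Proof. move=> h0 hF; apply: (big_ind (fun v => v < c)) => // x y hx hy.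
  by apply: Rmax_lub_lt. Qed.

Lemma bmax_ge0 (r : list I) x0 (F : I -> R) : x0 <= \big[Rmax/x0]_(i <- r) F i.
Proof. elim: r => [|a r IH]; rewrite ?big_nil ?big_cons; first lra.
  eapply Rle_trans; [exact IH| apply Rmax_r]. Qed.

Lemma bmax_cases (r : list I) x0 (F : I -> R) :
  \big[Rmax/x0]_(i <- r) F i = x0 \/ exists i, \big[Rmax/x0]_(i <- r) F i = F i.
Proof.
  apply: (big_ind (fun v => v = x0 \/ exists i, v = F i)); [by left| |by eauto].
  move=> x y hx hy. unfold Rmax; destruct (Rle_dec x y); auto.
Qed.
Lemma bmin_ge (r : list I) x0 (F : I -> R) c :
  c <= x0 -> (forall i, c <= F i) -> c <= \big[Rmin/x0]_(i <- r) F i.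
Proof. move=> h0 hF; apply: (big_ind (fun v => c <= v)) => // x y hx hy.
  by apply: Rmin_glb. Qed.
Lemma bmin_gt (r : list I) x0 (F : I -> R) c :
  c < x0 -> (forall i, c < F i) -> c < \big[Rmin/x0]_(i <- r) F i.
Proof. move=> h0 hF; apply: (big_ind (fun v => c < v)) => // x y hx hy.
  by apply: Rmin_glb_lt. Qed.
Lemma bmin_le1 (r : list I) x0 (F : I -> R) : \big[Rmin/x0]_(i <- r) F i <= x0.
Proof. elim: r => [|a r IH]; rewrite ?big_nil ?big_cons; first lra.
  eapply Rle_trans; [apply Rmin_r| exact IH]. Qed.
End Big0.
Section Big.
Variable I : eqType.
Lemma bmax_ub (r : list I) x0 (F : I -> R) i :
  i \in r -> F i <= \big[Rmax/x0]_(j <- r) F j.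
Proof. elim: r => [|a r IH] //; rewrite seq.in_cons big_cons => /orP [/eqP ->|h].
  apply Rmax_l. eapply Rle_trans; [exact (IH h)| apply Rmax_r]. Qed.









Lemma bmin_lb (r : list I) x0 (F : I -> R) i :
  i \in r -> \big[Rmin/x0]_(j <- r) F j <= F i.
Proof. elim: r => [|a r IH] //; rewrite seq.in_cons big_cons => /orP [/eqP ->|h].
  apply Rmin_l. eapply Rle_trans; [apply Rmin_r|exact (IH h)]. Qed.
End Big.

Lemma bmax_ubF (I : finType) x0 (F : I -> R) i : F i <= \big[Rmax/x0]_(j : I) F j.
Proof. apply bmax_ub. by rewrite mem_index_enum. Qed.
Lemma bmin_lbF (I : finType) x0 (F : I -> R) i : \big[Rmin/x0]_(j : I) F j <= F i.
Proof. apply bmin_lb. by rewrite mem_index_enum. Qed.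
Lemma ord_in n (i : 'I_n) : i \in index_enum 'I_n.
Proof. by rewrite mem_index_enum. Qed.

Definition mk (phi : R -> R) :=
  (forall t, 0 <= t -> 0 <= phi t) /\
  (forall s t, 0 <= s -> s <= t -> phi s <= phi t) /\
  (forall t, 0 < t -> Un_cv (fun k => iter k phi t) 0).

Lemma mk_lt phi : mk phi -> forall t, 0 < t -> phi t < t.
Proof.
  move=> [h0 [hm hc]] t ht. destruct (Rlt_or_le (phi t) t) as [h|h]; auto.
  have H : forall k, t <= iter k phi t.
  { elim=> [|k IH] /=; first lra. eapply Rle_trans; [exact h|]. apply hm; lra. }
  destruct (hc t ht t ht) as [N HN]. have := HN N (le_n _).
  rewrite /R_dist Rminus_0_r. have := H N. move=> a b.
  have: 0 <= iter N phi t by lra. move=> c. rewrite Rabs_right in b; lra.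
Qed.

Lemma mk_D phi : mk phi -> forall t, 0 < t -> exists s, t < s /\ phi s <= t.
Proof.
  move=> [h0 [hm hc]] t ht. apply NNPP => hn.
  have H : forall k, t < iter k phi (t+1).
  { elim=> [|k IH] /=; first lra. apply Rnot_le_lt => hle. apply hn.
    exists (iter k phi (t + 1)); split; auto. }
  have ht1 : 0 < t + 1 by lra.
  destruct (hc (t+1) ht1 t ht) as [N HN]. have := HN N (le_n _).
  rewrite /R_dist Rminus_0_r. have := H N. move=> a b.
  rewrite Rabs_right in b; lra.
Qed.

Lemma mk_char (Phi : R -> R) :
  (forall t, 0 <= t -> 0 <= Phi t) ->
  (forall s t, 0 <= s -> s <= t -> Phi s <= Phi t) ->
  (forall t, 0 < t -> Phi t < t) ->
  (forall t, 0 < t -> exists s, t < s /\ Phi s <= t) ->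
  forall t, 0 < t -> Un_cv (fun k => iter k Phi t) 0.
Proof.
  move=> hA hB hC hD t ht.
  have P0 : Phi 0 <= 0.
  { destruct (Rle_or_lt (Phi 0) 0) as [h|h]; auto.
    have := hC _ h. have := hB 0 (Phi 0) (Rle_refl _) (Rlt_le _ _ h). lra. }
  have Hnn : forall k, 0 <= iter k Phi t.
  { elim=> [|k IH] /=; [lra| by apply hA]. }
  have Hdec : Un_decreasing (fun k => iter k Phi t).
  { move=> k /=. destruct (Rle_lt_or_eq_dec _ _ (Hnn k)) as [h|h].
    - apply Rlt_le, hC, h.
    - rewrite -h. have := hA 0 (Rle_refl _). lra. }
  have Hlb : has_lb (fun k => iter k Phi t).
  { exists 0. move=> x [k ->]. rewrite /opp_seq. have := Hnn k. lra. }
  destruct (decreasing_cv _ Hdec Hlb) as [L HL].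
  have HLe := decreasing_ineq _ _ Hdec HL.
  have L0 : 0 <= L.
  { destruct (Rle_or_lt 0 L) as [h|h]; auto.
    destruct (HL (-L)) as [N HN]; first lra. have := HN N (le_n _).
    rewrite /R_dist. have := Hnn N. move=> a b. rewrite Rabs_right in b; lra. }
  destruct (Rle_lt_or_eq_dec _ _ L0) as [Lp|Le]; last by rewrite Le.
  exfalso. destruct (hD L Lp) as [s [hs1 hs2]].
  destruct (HL (s - L)) as [N HN]; first lra. have := HN N (le_n _).
  rewrite /R_dist. have := HLe N. move=> a b.
  rewrite Rabs_right in b; last lra.
  have e1 : iter N.+1 Phi t <= L.
  { rewrite /=. eapply Rle_trans; [|exact hs2]. apply hB; [apply Hnn| lra]. }
  have e2 := HLe N.+1. have e3 : iter N.+1 Phi t = L by lra.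
  have := HLe N.+2. rewrite /= -/(iter N.+1 Phi t) e3. have := hC L Lp. lra.
Qed.
Section Metric.
Variable X : Type.
Variable d : X -> X -> R.
Hypothesis hd : is_metric d.

Lemma d0 x : d x x = 0.
Proof. by apply (proj1 (proj2 hd)). Qed.
Lemma dpos x y : 0 <= d x y.
Proof. by apply (proj1 hd). Qed.
Lemma dsym x y : d x y = d y x.
Proof. by apply (proj1 (proj2 (proj2 hd))). Qed.
Lemma dtri x y z : d x z <= d x y + d y z.
Proof. by apply (proj2 (proj2 (proj2 hd))). Qed.

Lemma closure_in (S : X -> Prop) x : S x -> Defs.closure d S x.
Proof. move=> hx eps he; exists x; split => //; rewrite d0. lra. Qed.

Lemma closure_idem (S : X -> Prop) x : Defs.closure d (Defs.closure d S) x -> Defs.closure d S x.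
Proof.
  move=> h eps he. destruct (h (eps/2)) as [y [hy hxy]]; first lra.
  destruct (hy (eps/2)) as [z [hz hyz]]; first lra.
  exists z; split => //. have := dtri x y z. lra.
Qed.

Lemma closure_mono (S S' : X -> Prop) x : (forall y, S y -> S' y) -> Defs.closure d S x -> Defs.closure d S' x.
Proof. move=> hs h eps he. destruct (h eps he) as [y [hy1 hy2]]. exists y; auto. Qed.

Lemma fold_max_ub (l : list R) r : In r l -> r <= fold_right Rmax 0 l.
Proof. elim: l => [|a l IH] //= [->|h]; first apply Rmax_l.
  eapply Rle_trans; [exact (IH h)| apply Rmax_r]. Qed.

Lemma compact_bounded K : Defs.compact d K -> forall c, exists Rb, forall x, K x -> d c x <= Rb.
Proof.
  move=> hK c.
  destruct (hK R (fun r x => d c x < r)) as [l hl].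
  - move=> r x hx. exists (r - d c x); split; first lra.
    move=> y hy. have := dtri c x y. lra.
  - move=> x _. exists (d c x + 1). lra.
  exists (fold_right Rmax 0 l) => x hx. destruct (hl x hx) as [r [hr1 hr2]].
  have := fold_max_ub l r hr1. lra.
Qed.

Definition pos := {r : R | 0 < r}.
Definition fold_min (l : list pos) := fold_right (fun r acc => Rmin (proj1_sig r) acc) 1 l.
Lemma fold_min_pos l : 0 < fold_min l.
Proof. elim: l => [|a l IH] /=; first lra. apply Rmin_glb_lt => //. exact (proj2_sig a). Qed.
Lemma fold_min_lb l r : In r l -> fold_min l <= proj1_sig r.
Proof. elim: l => [|a l IH] //= [->|h]; first apply Rmin_l.
  eapply Rle_trans; [apply Rmin_r| exact (IH h)]. Qed.

Lemma compact_closed K : Defs.compact d K -> forall x, Defs.closure d K x -> K x.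
Proof.
  move=> hK x hx. apply NNPP => hn.
  destruct (hK pos (fun r y => proj1_sig r < d x y)) as [l hl].
  - move=> r y hy. exists (d x y - proj1_sig r); split; first lra.
    move=> z hz. have := dtri x y z. have := dtri x z y. rewrite (dsym z y). lra.
  - move=> y hy. have hxy : 0 < d x y.
    { destruct (Rle_lt_or_eq_dec _ _ (dpos x y)) as [h|h] => //.
      exfalso. apply hn. have := proj1 (proj1 (proj2 hd) x y) (esym h). by move=> ->. }
    have hp : 0 < d x y / 2 by lra. exists (exist (fun r => 0 < r) _ hp) => /=. lra.
  destruct (hx (fold_min l) (fold_min_pos l)) as [y [hy hxy]].
  destruct (hl y hy) as [r [hr1 hr2]]. have := fold_min_lb l r hr1. lra.
Qed.

Lemma compact_bounded2 K1 K2 : Defs.compact d K1 -> Defs.compact d K2 ->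
  exists D, 0 < D /\ forall x y, K1 x -> K2 y -> d x y <= D.
Proof.
  move=> h1 h2. destruct (classic (exists c, K1 c)) as [[c hc]|hn].
  - destruct (compact_bounded K1 h1 c) as [R1 hR1].
    destruct (compact_bounded K2 h2 c) as [R2 hR2].
    exists (Rabs R1 + Rabs R2 + 1); split; first (have := Rabs_pos R1; have := Rabs_pos R2; lra).
    move=> x y hx hy. have := dtri x c y. rewrite (dsym x c).
    have := hR1 x hx. have := hR2 y hy. have := Rle_abs R1. have := Rle_abs R2. lra.
  - exists 1; split; first lra. move=> x y hx; exfalso; eauto.
Qed.

Variables (m n : nat) (phi : 'I_n -> ('I_m -> X) -> X) (P : 'I_n -> Prop) (Phi : R -> R).
Hypothesis Phi0 : forall t, 0 <= t -> 0 <= Phi t.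
Hypothesis PhiM : forall s t, 0 <= s -> s <= t -> Phi s <= Phi t.
Hypothesis PhiC : forall t, 0 < t -> Un_cv (fun k => iter k Phi t) 0.
Hypothesis hcontr : forall j x y, d (phi j x) (phi j y) <= Phi (dmax d x y).

Lemma dmax_ge0 (x y : 'I_m -> X) : 0 <= dmax d x y.
Proof. apply bmax_ge0. Qed.

Lemma dmax_le (x y : 'I_m -> X) e : 0 <= e -> (forall i, d (x i) (y i) <= e) -> dmax d x y <= e.
Proof. move=> he hi. by apply bmax_le. Qed.

Lemma dmax_lt (x y : 'I_m -> X) e : 0 < e -> (forall i, d (x i) (y i) < e) -> dmax d x y < e.
Proof. move=> he hi. by apply bmax_lt. Qed.

Lemma key (Adm : (X -> Prop) -> Prop) (C T : X -> Prop) (D : R) :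
  (forall L, Adm L -> forall x, C x -> L x) ->
  (forall L, Adm L -> exists L', Adm L' /\ forall x, L' x ->
      exists j, P j /\ exists y, (forall i, L (y i)) /\ phi j y = x) ->
  (exists L0, Adm L0 /\ forall x, L0 x -> exists a, T a /\ d x a <= D) ->
  0 < D ->
  (forall j, P j -> forall a, (forall i, T (a i)) -> T (phi j a)) ->
  forall x, C x -> Defs.closure d T x.
Proof.
  move=> hC hstep hbase hD hT.
  have Hit : forall k, 0 <= iter k Phi D.
  { elim=> [|k IH] /=; [lra| by apply Phi0]. }
  have Hk : forall k, exists L, Adm L /\ forall x, L x -> exists a, T a /\ d x a <= iter k Phi D.
  { elim=> [|k [L [hL hLx]]] //=.
    destruct (hstep L hL) as [L' [hL' hL'x]]. exists L'; split => // x hx.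
    destruct (hL'x x hx) as [j [hj [y [hy <-]]]].
    have hc : forall i, exists a, T a /\ d (y i) a <= iter k Phi D by move=> i; apply hLx.
    pose af i := proj1_sig (constructive_indefinite_description _ (hc i)).
    have haf : forall i, T (af i) /\ d (y i) (af i) <= iter k Phi D.
    { move=> i. exact (proj2_sig (constructive_indefinite_description _ (hc i))). }
    exists (phi j af); split.
    - apply hT => // i. exact (proj1 (haf i)).
    - eapply Rle_trans; [apply hcontr|]. apply PhiM; first apply dmax_ge0.
      apply dmax_le; first apply Hit. move=> i; exact (proj2 (haf i)). }
  move=> x hx eps he. destruct (PhiC D hD eps he) as [N HN].
  have := HN N (le_n _). rewrite /R_dist Rminus_0_r Rabs_right; last by apply Rle_ge, Hit.
  move=> hN. destruct (Hk N) as [L [hL hLx]].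
  destruct (hLx x (hC L hL x hx)) as [a [ha1 ha2]]. exists a; split => //. lra.
Qed.
End Metric.
Lemma zadeh_spec {Z Y : Type} (T : Z -> Y) (v : Z -> R) y :
  (forall z, v z <= 1) ->
  ((exists z, T z = y) /\ is_lub (fun r => exists z, T z = y /\ r = v z) (zadeh T v y)) \/
  (~ (exists z, T z = y) /\ zadeh T v y = 0).
Proof.
  move=> h1. rewrite /zadeh. apply (epsilon_spec (inhabits 0)).
  destruct (classic (exists z, T z = y)) as [[z hz]|hn].
  - have hb : bound (fun r => exists z, T z = y /\ r = v z).
    { exists 1 => r [z' [_ ->]]. apply h1. }
    destruct (completeness _ hb) as [l hl]; first by exists (v z), z.
    exists l; left; split => //; by exists z.
  - exists 0; right; by split.
Qed.

Lemma zadeh_ub {Z Y : Type} (T : Z -> Y) (v : Z -> R) z :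
  (forall z, v z <= 1) -> v z <= zadeh T v (T z).
Proof.
  move=> h1. destruct (zadeh_spec T v (T z) h1) as [[_ [hu _]]|[hn _]].
  - apply hu. by exists z.
  - exfalso; apply hn; by exists z.
Qed.

Lemma zadeh_le1 {Z Y : Type} (T : Z -> Y) (v : Z -> R) y :
  (forall z, v z <= 1) -> zadeh T v y <= 1.
Proof.
  move=> h1. destruct (zadeh_spec T v y h1) as [[_ [_ hl]]|[_ ->]]; last lra.
  apply hl => r [z [_ ->]]. apply h1.
Qed.

Lemma zadeh_ge0 {Z Y : Type} (T : Z -> Y) (v : Z -> R) y :
  (forall z, 0 <= v z <= 1) -> 0 <= zadeh T v y.
Proof.
  move=> h. have h1 : forall z, v z <= 1 by move=> z; apply h.
  destruct (zadeh_spec T v y h1) as [[[z hz] [hu _]]|[_ ->]]; last lra.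
  eapply Rle_trans; [apply (h z)|]. apply hu. by exists z.
Qed.

Lemma zadeh_gt {Z Y : Type} (T : Z -> Y) (v : Z -> R) y c :
  (forall z, v z <= 1) -> 0 <= c -> c < zadeh T v y -> exists z, T z = y /\ c < v z.
Proof.
  move=> h1 hc hlt. destruct (zadeh_spec T v y h1) as [[_ [_ hl]]|[_ e]]; last lra.
  apply NNPP => hn. have : zadeh T v y <= c; last lra.
  apply hl => r [z [hz ->]]. apply Rnot_lt_le => hlt'. apply hn; eauto.
Qed.

Lemma fprod_le1 {X} m (us : 'I_m -> X -> R) x : fprod us x <= 1.
Proof. apply bmin_le1. Qed.
Lemma fprod_ge {X} m (us : 'I_m -> X -> R) x c : c <= 1 -> (forall i, c <= us i (x i)) -> c <= fprod us x.
Proof. move=> h hi. by apply bmin_ge. Qed.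
Lemma fprod_lb {X} m (us : 'I_m -> X -> R) x i : fprod us x <= us i (x i).
Proof. exact: (bmin_lbF _ 1 (fun i => us i (x i)) i). Qed.

Lemma glb_exists (E : R -> Prop) : (exists t, E t) -> (forall t, E t -> 0 <= t) -> exists v, Defs.is_glb E v.
Proof.
  move=> [t ht] h0.
  have hb : bound (fun y => E (- y)). { exists 0 => y hy. have := h0 _ hy. lra. }
  destruct (completeness _ hb) as [l [hl1 hl2]]. { exists (-t). by rewrite Ropp_involutive. }
  exists (-l); split.
  - move=> s hs. have : -s <= l; last lra. apply hl1. by rewrite Ropp_involutive.
  - move=> w hw. have : l <= -w; last lra. apply hl2 => y hy. have := hw _ hy. lra.
Qed.

Lemma inf01_spec (S : R -> Prop) : (forall t, S t -> 0 <= t) ->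
  ((exists t, S t) /\ Defs.is_glb S (inf01 S)) \/ (~ (exists t, S t) /\ inf01 S = 1).
Proof.
  move=> h. rewrite /inf01. apply (epsilon_spec (inhabits 0)).
  destruct (classic (exists t, S t)) as [he|hn].
  - destruct (glb_exists S he h) as [v hv]. exists v; by left.
  - exists 1; by right.
Qed.

Lemma rplus0 (rho : R -> R) :
  (forall s t, 0 <= s -> s <= t -> t <= 1 -> rho s <= rho t) ->
  r_plus rho = 0 -> forall t, 0 < t <= 1 -> 0 < rho t.
Proof.
  move=> hm hr t ht. apply Rnot_le_lt => hle. move: hr. rewrite /r_plus.
  destruct (inf01_spec (fun t => 0 <= t <= 1 /\ 0 < rho t)) as [[_ [hg1 hg2]]|[_ ->]].
  - move=> t' [[]] //.
  - have : t <= inf01 (fun t => 0 <= t <= 1 /\ 0 < rho t); last lra.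
    apply hg2 => t' [ht1 ht2]. apply Rnot_lt_le => hlt.
    have := hm t' t (proj1 ht1) (Rlt_le _ _ hlt) (proj2 ht). lra.
  - lra.
Qed.

Lemma beta1 (rho : R -> R) : Defs.beta rho 1 = 1 -> forall t, 0 <= t < 1 -> rho t < 1.
Proof.
  move=> hb t ht. apply Rnot_le_lt => hle. move: hb. rewrite /Defs.beta.
  destruct (inf01_spec (fun t => 0 <= t <= 1 /\ 1 <= rho t)) as [[_ [hg1 hg2]]|[hn _]].
  - move=> t' [[]] //.
  - have := hg1 t (conj (conj (proj1 ht) (Rlt_le _ _ (proj2 ht))) hle). lra.
  - exfalso; apply hn. exists t; split => //; lra.
Qed.
Theorem mainTheorem16 (X : Type) (d : X -> X -> R) (m n : nat)
  (phi : 'I_n -> ('I_m -> X) -> X) (rho : 'I_n -> R -> R)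
  (u : X -> R) (AS AS' : X -> Prop) :
  is_metric d -> complete d -> (0 < m)%nat ->
  matkowski_GIFS d phi -> admissible rho ->
  is_fuzzy_attractor d phi rho u ->
  is_attractor d (fun _ => True) phi AS ->
  is_attractor d (fun j => rho j 1 = 1) phi AS' ->
  (* (1) *)
  ((forall x, zero_cut d u x -> AS x) /\
   ((forall j, r_plus (rho j) = 0) -> forall x, zero_cut d u x <-> AS x)) /\
  (* (2) *)
  ((forall x, AS' x -> alpha_cut u 1 x) /\
   ((forall j, rho j 1 = 1 -> beta (rho j) 1 = 1) -> forall x, AS' x <-> alpha_cut u 1 x)) /\
  (* (3) *)
  ((forall j, rho j 1 = 1) -> forall x, u x = chi AS x).
Proof.
  move=> hd _ _ hG [hr01 [hrm [_ [hr0 _]]]] [[hfz [hnorm [husc hK]]] hfix]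
    [hASne [hASc hASe]] [hAS'ne [hAS'c hAS'e]].
  pose phis j := proj1_sig (constructive_indefinite_description _ (proj2 (hG j))).
  have hphis : forall j, mk (phis j) /\ forall x y, d (phi j x) (phi j y) <= phis j (dmax d x y).
  { move=> j. have := proj2_sig (constructive_indefinite_description _ (proj2 (hG j))).
    rewrite -/(phis j). move=> [a [b [c e]]]. split => //. }
  pose Phi t := \big[Rmax/0]_(j < n) phis j t.
  have Phi0 : forall t, 0 <= t -> 0 <= Phi t by move=> t _; apply bmax_ge0.
  have PhiM : forall s t, 0 <= s -> s <= t -> Phi s <= Phi t.
  { move=> s t hs hst. apply bmax_le; first apply bmax_ge0. move=> j.
    eapply Rle_trans; [|exact (bmax_ubF _ 0 (fun j => phis j t) j)].
    by apply (proj1 (proj2 (proj1 (hphis j)))). }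
  have PhiC : forall t, 0 < t -> Un_cv (fun k => iter k Phi t) 0.
  { apply mk_char => //.
    - move=> t ht. apply bmax_lt => // j. by apply mk_lt; first apply hphis.
    - move=> t ht. have hs : forall j, exists s, t < s /\ phis j s <= t.
      { move=> j; apply mk_D => //; apply hphis. }
      pose sj j := proj1_sig (constructive_indefinite_description _ (hs j)).
      have hsj : forall j, t < sj j /\ phis j (sj j) <= t.
      { move=> j. exact (proj2_sig (constructive_indefinite_description _ (hs j))). }
      exists (\big[Rmin/(t+1)]_(j < n) sj j); split.
      + apply bmin_gt; first lra. move=> j; apply hsj.
      + apply bmax_le; first lra. move=> j.
        eapply Rle_trans; [|exact (proj2 (hsj j))].
        apply (proj1 (proj2 (proj1 (hphis j)))).
        * have : t < \big[Rmin/(t+1)]_(j0 < n) sj j0; last lra.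
          apply bmin_gt; first lra. move=> j'; apply hsj.
        * exact (bmin_lbF _ (t+1) sj j). }
  have hcontr : forall j x y, d (phi j x) (phi j y) <= Phi (dmax d x y).
  { move=> j x y. eapply Rle_trans; first apply (proj2 (hphis j)).
    exact (bmax_ubF _ 0 (fun j => phis j (dmax d x y)) j). }
  have KEY := key X d m n phi.
  set v := fprod (fun _ : 'I_m => u).
  have hv1 : forall y, v y <= 1 by move=> y; apply fprod_le1.
  have hv : forall y, 0 <= v y <= 1.
  { move=> y; split; last apply hv1. apply fprod_ge; first lra. move=> i; apply hfz. }
  have hz : forall j x, 0 <= zadeh (phi j) v x <= 1.
  { move=> j x; split; [by apply zadeh_ge0 | by apply zadeh_le1]. }
  have hZ : forall x, u x = \big[Rmax/0]_(j < n) rho j (zadeh (phi j) v x).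
  { move=> x. by rewrite -hfix. }
  have hZge : forall j x, rho j (zadeh (phi j) v x) <= u x.
  { move=> j x. have := bmax_ubF _ 0 (fun j => rho j (zadeh (phi j) v x)) j. by rewrite -hZ. }
  have hZcase : forall x, 0 < u x -> exists j, u x = rho j (zadeh (phi j) v x).
  { move=> x hx. move: (hx); rewrite (hZ x).
    destruct (bmax_cases _ (index_enum 'I_n) 0 (fun j => rho j (zadeh (phi j) v x))) as [e|[j e]];
      rewrite e; [lra|]. move=> _; by exists j. }
  have zc_pos : forall x, 0 < u x -> zero_cut d u x by move=> x hx; apply closure_in.
  have F1 : forall x, 0 < u x -> exists j, exists y, (forall i, 0 < u (y i)) /\ phi j y = x.
  { move=> x hx. destruct (hZcase x hx) as [j e]. rewrite e in hx.
    have hz0 : 0 < zadeh (phi j) v x.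
    { destruct (Rle_lt_or_eq_dec _ _ (proj1 (hz j x))) as [h|h] => //.
      rewrite -h hr0 in hx; lra. }
    destruct (zadeh_gt (phi j) v x 0 hv1 (Rle_refl _) hz0) as [y [hy1 hy2]].
    exists j, y; split => // i. eapply Rlt_le_trans; [exact hy2|]. exact (fprod_lb m (fun _ => u) y i). }
  have F2 : forall j y, rho j 1 = 1 -> (forall i, 1 <= u (y i)) -> 1 <= u (phi j y).
  { move=> j y hj hy. have h1 : 1 <= v y by apply fprod_ge; [lra|].
    have h2 := zadeh_ub (phi j) v y hv1. have h3 := proj2 (hz j (phi j y)).
    have e : zadeh (phi j) v (phi j y) = 1 by lra.
    have := hZge j (phi j y). by rewrite e hj. }
  have P1a : forall x, zero_cut d u x -> AS x.
  { destruct (compact_bounded2 X d hd _ _ hK hASc) as [D [hD hDb]].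
    have H : forall x, 0 < u x -> Defs.closure d AS x.
    { apply (KEY (fun _ => True) Phi Phi0 PhiM PhiC hcontr (fun L => L = (fun x => 0 < u x))
        (fun x => 0 < u x) AS D) => //.
      - by move=> L ->.
      - move=> L ->. exists (fun x => 0 < u x); split => // x hx.
        destruct (F1 x hx) as [j [y hy]]. exists j; split => //; by exists y.
      - exists (fun x => 0 < u x); split => // x hx. destruct hASne as [a ha].
        exists a; split => //. apply hDb => //. by apply zc_pos.
      - move=> j _ a ha. apply hASe. exists j; split => //. by exists a. }
    move=> x hx. apply (compact_closed X d hd AS hASc). apply closure_idem => //.
    exact (closure_mono X d _ _ x H hx). }
  have P2a : forall x, AS' x -> 1 <= u x.
  { destruct (compact_bounded2 X d hd _ _ hAS'c hK) as [D [hD hDb]].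
    have H : forall x, AS' x -> Defs.closure d (fun x => 1 <= u x) x.
    { apply (KEY (fun j => rho j 1 = 1) Phi Phi0 PhiM PhiC hcontr (fun L => L = AS')
        AS' (fun x => 1 <= u x) D) => //.
      - by move=> L ->.
      - move=> L ->. exists AS'; split => // x hx. exact (proj1 (hAS'e x) hx).
      - exists AS'; split => // x hx. destruct hnorm as [a ha].
        exists a; split; first lra. apply hDb => //; apply zc_pos; lra.
      - move=> j hj a ha. by apply F2. }
    move=> x hx. have hc := H x hx.
    apply Rnot_lt_le => hlt. destruct (husc x (1 - u x)) as [del [hdel hdl]]; first lra.
    destruct (hc del hdel) as [y [hy1 hy2]]. have := hdl y hy2. lra. }
  split; [split => //|split; [|]].
  -
    move=> hrp.
    have F3 : forall j y, (forall i, 0 < u (y i)) -> 0 < u (phi j y).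
    { move=> j y hy. have h1 : 0 < v y by apply bmin_gt; [lra|].
      have h2 := zadeh_ub (phi j) v y hv1. have h3 := proj2 (hz j (phi j y)).
      have := rplus0 (rho j) (hrm j) (hrp j) (zadeh (phi j) v (phi j y)) ltac:(lra).
      have := hZge j (phi j y). lra. }
    destruct (compact_bounded2 X d hd _ _ hASc hK) as [D [hD hDb]].
    have H : forall x, AS x -> Defs.closure d (zero_cut d u) x.
    { apply (KEY (fun _ => True) Phi Phi0 PhiM PhiC hcontr (fun L => L = AS)
        AS (zero_cut d u) D) => //.
      - by move=> L ->.
      - move=> L ->. exists AS; split => // x hx.
        destruct (proj1 (hASe x) hx) as [j [_ hj]]. by exists j.
      - exists AS; split => // x hx. destruct hnorm as [a ha].
        exists a; split; first (apply zc_pos; lra). apply hDb => //. apply zc_pos; lra.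
      - move=> j _ a ha eps he.
        destruct (proj1 (hG j) a eps he) as [del [hdel hcd]].
        have hs : forall i, exists s, 0 < u s /\ d (a i) s < del by move=> i; apply ha.
        pose sf i := proj1_sig (constructive_indefinite_description _ (hs i)).
        have hsf : forall i, 0 < u (sf i) /\ d (a i) (sf i) < del.
        { move=> i. exact (proj2_sig (constructive_indefinite_description _ (hs i))). }
        exists (phi j sf); split.
        + apply F3 => i; apply hsf.
        + apply hcd. apply dmax_lt => // i; apply hsf. }
    move=> x; split; first by apply P1a.
    move=> hx. apply closure_idem => //. by apply H.
  - split; first exact P2a.
    move=> hb.
    destruct (compact_bounded2 X d hd _ _ hK hAS'c) as [D [hD hDb]].
    have H : forall x, 1 <= u x -> Defs.closure d AS' x.
    { apply (KEY (fun j => rho j 1 = 1) Phi Phi0 PhiM PhiC hcontr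
        (fun L => exists del, 0 < del <= 1/2 /\ L = (fun x => 1 - del <= u x))
        (fun x => 1 <= u x) AS' D) => //.
      - move=> L [del [hdel ->]] x hx /=. lra.
      - move=> L [eta [heta ->]].
        pose g j := if Req_EM_T (rho j 1) 1 then rho j (1 - eta) else rho j 1.
        have hg : forall j, g j < 1.
        { move=> j; rewrite /g; destruct (Req_EM_T (rho j 1) 1) as [e|ne].
          - apply beta1; [by apply hb | lra].
          - have := hr01 j 1 ltac:(lra). move=> [_ h].
            destruct (Rle_lt_or_eq_dec _ _ h) => //. }
        pose G := \big[Rmax/0]_(j < n) g j.
        have hGg : G < 1 by apply bmax_lt; [lra|].
        pose del := Rmin (1/2) ((1 - G)/2).
        have hdel : 0 < del <= 1/2.
        { split; [apply Rmin_glb_lt; lra| apply Rmin_l]. }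
        have hdelG : G < 1 - del. { have := Rmin_r (1/2) ((1-G)/2). rewrite -/del. lra. }
        exists (fun x => 1 - del <= u x); split; first by exists del.
        move=> x hx. have hx0 : 0 < u x by lra.
        destruct (hZcase x hx0) as [j e]. rewrite e in hx.
        have hgj : g j <= G := bmax_ubF _ 0 g j.
        have hzj := hz j x.
        rewrite /g in hgj. destruct (Req_EM_T (rho j 1) 1) as [ej|nej].
        + exists j; split => //.
          have hzg : 1 - eta < zadeh (phi j) v x.
          { apply Rnot_le_lt => hle. have h1 : 1 - eta <= 1 by lra. have := hrm j _ _ (proj1 hzj) hle h1. simpl in hgj. lra. }
          destruct (zadeh_gt (phi j) v x (1-eta) hv1 ltac:(lra) hzg) as [y [hy1 hy2]].
          exists y; split => // i.
          have h : v y <= u (y i) := fprod_lb m (fun _ => u) y i. simpl. lra.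
        + exfalso. simpl in hgj. have := hrm j _ _ (proj1 hzj) (proj2 hzj) (Rle_refl 1). lra.
      - exists (fun x => 1 - 1/2 <= u x); split; first (exists (1/2); split => //; lra).
        move=> x hx. destruct hAS'ne as [a ha]. exists a; split => //.
        apply hDb => //. apply zc_pos; lra.
      - move=> j hj a ha. apply hAS'e. exists j; split => //; by exists a. }
    move=> x; split; first by apply P2a.
    move=> hx. by apply (compact_closed X d hd AS' hAS'c), H.
  - move=> hall x. rewrite /chi.
    destruct (excluded_middle_informative (AS x)) as [h|h].
    + have hx' : AS' x.
      { destruct (compact_bounded2 X d hd _ _ hASc hAS'c) as [D [hD hDb]].
        apply (compact_closed X d hd AS' hAS'c).
        apply (KEY (fun j => rho j 1 = 1) Phi Phi0 PhiM PhiC hcontr (fun L => L = AS)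
          AS AS' D) => //.
        - by move=> L ->.
        - move=> L ->. exists AS; split => // y hy.
          destruct (proj1 (hASe y) hy) as [j [_ hj]]. exists j; split; [apply hall| exact hj].
        - exists AS; split => // y hy. destruct hAS'ne as [a ha].
          exists a; split => //. by apply hDb.
        - move=> j hj a ha. apply hAS'e. exists j; split => //; by exists a. }
      have := P2a x hx'. move: (hfz x) => [a b]. simpl. lra.
    + have := hfz x. move=> [h0 _].
      destruct (Rle_lt_or_eq_dec _ _ h0) as [hp|hp] => //.
      simpl. exfalso. apply h, P1a, zc_pos, hp.
Qed.
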